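(* Let $\theta$ be a random variable with a continuous distribution, let $u(q,\theta)$ be twice differentiable, strictly concave and monotone increasing in $q$ for every $\theta$, let $\pi_0>0$, $\pi_2>0$, $p\in(0,1)$, and let $\phi:\mathbb{R}\to\mathbb{R}$ be convex, twice differentiable, with $\phi(0)=\phi'(0)=0$ and $\phi(x)=\phi(-x)$. Define $J^b(f,q,\theta)=\pi_0 q-u(q,\theta)+\phi(f-q)$, $J^c(f,q,\theta)=\pi_0 q-u(q,\theta)-\pi_2(f-q)$, $q^b(f,\theta)=\arg\min_q J^b(f,q,\theta)$, $q^c(\theta)=\arg\min_q J^c(f,q,\theta)$, $$H(f)=p\,\mathbb{E}_\theta J^c(f,q^c(\theta),\theta)+(1-p)\,\mathbb{E}_\theta J^b(f,q^b(f,\theta),\theta),$$ and the expected marginal utility $$M(f)=p\,\mathbb{E}_\theta\frac{\partial u}{\partial q}(q^c(\theta),\theta)+(1-p)\,\mathbb{E}_\theta\frac{\partial u}{\partial q}(q^b(f,\theta),\theta).$$ Then the optimal baseline report $f^*$ (a minimizer of $H$) satisfies $\pi_0=M(f^* )$ and is a global minimizer of $H$. Moreover, the minimizer is unique when $\phi$ is strictly convex.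
   Context: This describes a consumer in an incentive-based demand response program with self-reported baseline $f$: with probability $p$ the consumer is called and paid $\pi_2$ per unit of reduction $f-q$; otherwise it is charged the penalty $\phi(f-q)$. $\pi_0$ is the retail price of electricity. The minimizers $q^b$, $q^c$ are assumed to exist and be characterized by their first-order conditions. *)

(* Defs.v *)
From HB Require Import structures.
From mathcomp Require Import all_boot all_order all_algebra.
From mathcomp Require Import all_classical all_reals all_analysis.
Set Implicit Arguments. Unset Strict Implicit. Unset Printing Implicit Defensive.
Import Order.TTheory GRing.Theory Num.Theory.
Import numFieldNormedType.Exports.
Local Open Scope classical_set_scope.
Local Open Scope ring_scope.

Section Defs.
Variable R : realType.

Definition twice_diff (g : R -> R) : Prop :=
  forall x, derivable g x 1 /\ derivable (derive1 g) x 1.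

Definition convex_fun (g : R -> R) : Prop :=
  forall a b t, 0 <= t <= 1 -> g (t * a + (1 - t) * b) <= t * g a + (1 - t) * g b.

Definition strictly_convex_fun (g : R -> R) : Prop :=
  forall a b t, a != b -> 0 < t < 1 ->
    g (t * a + (1 - t) * b) < t * g a + (1 - t) * g b.

Definition strictly_concave_fun (g : R -> R) : Prop :=
  forall a b t, a != b -> 0 < t < 1 ->
    t * g a + (1 - t) * g b < g (t * a + (1 - t) * b).

Definition Jb (pi0 : R) (u : R -> R -> R) (phi : R -> R) (f q th : R) : R :=
  pi0 * q - u q th + phi (f - q).

Definition Jc (pi0 pi2 : R) (u : R -> R -> R) (f q th : R) : R :=
  pi0 * q - u q th - pi2 * (f - q).

Definition du (u : R -> R -> R) (q th : R) : R := derive1 (fun x => u x th) q.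

Definition Ex (mu : probability R R) (g : R -> R) : R := Rintegral mu setT g.

Definition Hfun (mu : probability R R) (p pi0 pi2 : R) (u : R -> R -> R)
  (phi : R -> R) (qb : R -> R -> R) (qc : R -> R) (f : R) : R :=
  p * Ex mu (fun th => Jc pi0 pi2 u f (qc th) th)
  + (1 - p) * Ex mu (fun th => Jb pi0 u phi f (qb f th) th).

Definition Mfun (mu : probability R R) (p : R) (u : R -> R -> R)
  (qb : R -> R -> R) (qc : R -> R) (f : R) : R :=
  p * Ex mu (fun th => du u (qc th) th)
  + (1 - p) * Ex mu (fun th => du u (qb f th) th).

End Defs.

(* Main.v *)
Require Import Defs.
From HB Require Import structures.
From mathcomp Require Import all_boot all_order all_algebra.
From mathcomp Require Import all_classical all_reals all_analysis.
Import Order.TTheory GRing.Theory Num.Theory.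
Import numFieldNormedType.Exports.
Local Open Scope classical_set_scope.
Local Open Scope ring_scope.
From mathcomp Require Import ring lra.
Set Implicit Arguments. Unset Strict Implicit. Unset Printing Implicit Defensive.

Section S.
Variable R : realType.
Lemma deriv_eps (g : R -> R) x : derivable g x 1 -> forall e : R, 0 < e ->
  exists2 d : R, 0 < d & forall h, `|h| < d -> `|g (x + h) - g x - h * derive1 g x| <= e * `|h|.
Proof.
move=> dg e e0.
have := dg; rewrite /derivable => /cvg_ex [l Hl].
have lE : derive1 g x = l.
  by rewrite derive1E /derive; apply: cvg_lim.
move: Hl => /cvgrPdist_le /(_ e e0).
rewrite near_withinE => /nbhs_ballP [d /= d0 Hd].
exists d => // h hd.
have [->|h0] := eqVneq h 0.
  by rewrite addr0 subrr mul0r subr0 normr0 mulr0.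
have := Hd h _ h0.
have hb : ball 0 d h by rewrite /ball /= sub0r normrN.
move=> /(_ hb); rewrite lE [h%:A]mulr1 /GRing.scale /= (addrC h x) => H.
have -> : g (x + h) - g x - h * l = - h * (l - h^-1 * (g (x + h) - g x)).
  by field.
by rewrite normrM normrN mulrC ler_wpM2r.
Qed.

Lemma grad_ineq (g : R -> R) x y : convex_fun g -> derivable g x 1 ->
  g x + derive1 g x * (y - x) <= g y.
Proof.
move=> cg dg.
set D := derive1 g x.
have key : forall e : R, 0 < e -> D * (y - x) - g y + g x <= e * `|y - x|.
  move=> e e0; have [d d0 Hd] := deriv_eps dg e0.
  have yx0 : 0 <= `|y - x| by [].
  set t := d / (d + `|y - x|).
  have t0 : 0 < t by rewrite divr_gt0 // ltr_wpDr.
  have t1 : t <= 1 by rewrite ler_pdivrMr ?mul1r ?lerDl // ltr_wpDr.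
  have ht : `|t * (y - x)| < d.
    rewrite normrM (ger0_norm (ltW t0)) /t mulrAC ltr_pdivrMr ?ltr_wpDr //.
    have [->|yxp] := eqVneq `|y - x| 0; first by rewrite !mulr0 addr0 mulr_gt0.
    rewrite mulrDr ltrDr mulr_gt0 // lt0r yxp //.
  have := Hd _ ht => /ler_normlP [H1 _].
  have := cg y x t; rewrite ltW //= t1 => /(_ isT).
  have -> : t * y + (1 - t) * x = x + t * (y - x) by ring.
  move=> H2.
  have H3 : t * (D * (y - x) - g y + g x) <= t * (e * `|y - x|).
    move: H1; rewrite normrM (ger0_norm (ltW t0)) => H1.
    rewrite /D; nra.
  by rewrite ler_pM2l in H3.
have [yx|yx] := eqVneq y x; first by rewrite yx subrr mulr0 addr0.
have nyx : 0 < `|y - x| by rewrite normr_gt0 subr_eq0.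
rewrite leNgt; apply/negP => Hlt.
set gap := D * (y - x) - g y + g x.
have gp : 0 < gap by rewrite /gap; lra.
have := key (gap / (2 * `|y - x|)) (divr_gt0 gp (mulr_gt0 (ltr0Sn _ 1) nyx)).
have -> : gap / (2 * `|y - x|) * `|y - x| = gap / 2.
  by field; rewrite gt_eqF.
rewrite /gap in gp *; lra.
Qed.

Definition hasd (L : R -> R) x c := forall e : R, 0 < e ->
  exists2 d : R, 0 < d & forall h, `|h| < d -> `|L (x + h) - L x - h * c| <= e * `|h|.

Lemma hasd_der (g : R -> R) x : derivable g x 1 -> hasd g x (derive1 g x).
Proof. move=> dg e e0; exact: deriv_eps. Qed.

Lemma hasdD (A B : R -> R) x a b : hasd A x a -> hasd B x b ->
  hasd (fun q => A q + B q) x (a + b).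
Proof.
move=> hA hB e e0.
have e20 : 0 < e / 2 by rewrite divr_gt0.
have [d1 d10 H1] := hA _ e20; have [d2 d20 H2] := hB _ e20.
exists (Num.min d1 d2); first by rewrite lt_min d10 d20.
move=> h; rewrite lt_min => /andP [hd1 hd2].
have := H1 _ hd1; have := H2 _ hd2.
have -> : A (x + h) + B (x + h) - (A x + B x) - h * (a + b) =
  (A (x + h) - A x - h * a) + (B (x + h) - B x - h * b) by ring.
move=> K2 K1; apply: le_trans (ler_normD _ _) _.
have -> : e * `|h| = e / 2 * `|h| + e / 2 * `|h| by field.
exact: lerD.
Qed.

Lemma hasdZ (A : R -> R) x a k : hasd A x a -> hasd (fun q => k * A q) x (k * a).
Proof.
move=> hA e e0.
have k0 : 0 < `|k| + 1 by rewrite ltr_wpDl.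
have [d d0 H] := hA (e / (`|k| + 1)) (divr_gt0 e0 k0).
exists d => // h hd; have := H _ hd.
have -> : k * A (x + h) - k * A x - h * (k * a) = k * (A (x + h) - A x - h * a) by ring.
move=> K; rewrite normrM.
apply: (le_trans (ler_wpM2l (normr_ge0 _) K)).
rewrite mulrA ler_wpM2r //.
have -> : `|k| * (e / (`|k| + 1)) = e * (`|k| / (`|k| + 1)) by rewrite mulrCA.
rewrite ler_piMr ?ltW // ltr_pdivrMr // mul1r ltrDl //.
Qed.

Lemma hasd_id x : hasd (fun q => q) x 1.
Proof.
move=> e e0; exists 1 => // h _.
have -> : x + h - x - h * 1 = 0 by ring.
by rewrite normr0 mulr_ge0 // ltW.
Qed.

Lemma hasd_refl (g : R -> R) f q : derivable g (f - q) 1 ->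
  hasd (fun r => g (f - r)) q (- derive1 g (f - q)).
Proof.
move=> dg e e0; have [d d0 H] := deriv_eps dg e0.
exists d => // h hd.
have hd' : `|- h| < d by rewrite normrN.
have := H _ hd'; rewrite normrN.
have -> : f - q + - h = f - (q + h) by ring.
by rewrite mulNr mulrN.
Qed.

Lemma hasd_min (L : R -> R) x c : hasd L x c -> (forall y, L x <= L y) -> c = 0.
Proof.
move=> hL Lmin; apply/eqP; apply/negPn/negP => c0.
have ac : 0 < `|c| by rewrite normr_gt0.
have [d d0 H] := hL (`|c| / 2) (divr_gt0 ac (ltr0Sn _ 1)).
set h := - (Num.sg c) * (d / 2).
have hn : `|h| = d / 2.
  by rewrite /h normrM normrN normr_sg c0 mul1r ger0_norm // divr_ge0 // ltW.
have hd : `|h| < d by rewrite hn ltr_pdivrMr // ltr_pMr // ltr1n.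
have := H _ hd; rewrite hn => /ler_normlP [_ K].
have := Lmin (x + h).
have hc : h * c = - (`|c| * (d / 2)).
  by rewrite /h normrEsg; ring.
move: K; rewrite hc.
have : 0 < `|c| * (d / 2) by rewrite mulr_gt0 // divr_gt0.
have -> : `|c| / 2 * (d / 2) = `|c| * (d / 2) / 2 by field.
lra.
Qed.

Section Cont.
Variables (G D : R -> R).
Hypothesis Hsub : forall x y, G x + D x * (y - x) <= G y.
Hypothesis Hup : forall x e, 0 < e -> exists2 d : R, 0 < d &
  forall h, `|h| < d -> G (x + h) <= G x + D x * h + e * `|h|.

Lemma D_mono x y : x <= y -> D x <= D y.
Proof.
move=> xy; have := Hsub x y; have := Hsub y x.
rewrite le_eqVlt in xy; case/orP: xy => [/eqP -> //|xy] H1 H2.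
have : (D y - D x) * (y - x) >= 0 by lra.
by rewrite pmulr_lge0 ?subr_gt0 // subr_ge0.
Qed.

Lemma D_cont x e : 0 < e -> exists2 d : R, 0 < d &
  forall y, `|y - x| < d -> `|D y - D x| <= e.
Proof.
move=> e0; have e20 : 0 < e / 2 by rewrite divr_gt0.
have [d0 d00 Hd] := Hup x e20.
set h0 := d0 / 2.
have h00 : 0 < h0 by rewrite divr_gt0.
have h0d : `|h0| < d0 by rewrite gtr0_norm // /h0 ltr_pdivrMr // ltr_pMr // ltr1n.
have h0d' : `|- h0| < d0 by rewrite normrN.
have Kr := Hd _ h0d; have Kl := Hd _ h0d'.
rewrite gtr0_norm // in Kr; rewrite normrN gtr0_norm // in Kl.
exists (h0 / 2); first by rewrite divr_gt0.
move=> y yx.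
have [xy|xy] := leP x y.
  rewrite ger0_norm ?subr_ge0 ?D_mono //.
  rewrite ger0_norm ?subr_ge0 // in yx.
  have S1 := Hsub y (x + h0); have S2 := Hsub x y.
  have Dm := D_mono xy.
  have P : (D y - D x) * (h0 - (y - x)) <= e / 2 * h0 by nra.
  have hs : h0 / 2 <= h0 - (y - x) by lra.
  rewrite leNgt; apply/negP => Hc.
  have : e * (h0 / 2) < (D y - D x) * (h0 - (y - x)).
    apply: (le_lt_trans (ler_wpM2l (ltW e0) hs)).
    by rewrite ltr_pM2r // (lt_le_trans _ hs) // divr_gt0.
  have -> : e * (h0 / 2) = e / 2 * h0 by field.
  lra.
rewrite distrC ger0_norm ?subr_ge0 ?(D_mono (ltW xy)) //.
rewrite distrC ger0_norm ?subr_ge0 ?ltW // in yx.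
have S1 := Hsub y (x + - h0); have S2 := Hsub x y.
have Dm := D_mono (ltW xy).
have P : (D x - D y) * (h0 - (x - y)) <= e / 2 * h0 by nra.
have hs : h0 / 2 <= h0 - (x - y) by lra.
rewrite leNgt; apply/negP => Hc.
have : e * (h0 / 2) < (D x - D y) * (h0 - (x - y)).
  apply: (le_lt_trans (ler_wpM2l (ltW e0) hs)).
  by rewrite ltr_pM2r // (lt_le_trans _ hs) // divr_gt0.
have -> : e * (h0 / 2) = e / 2 * h0 by field.
lra.
Qed.
End Cont.

Lemma hasd_ext (L L' : R -> R) x c : (forall q, L q = L' q) -> hasd L x c -> hasd L' x c.
Proof. by move=> e; have -> : L' = L by apply/funext => q; rewrite e. Qed.

Lemma hasd_cst k x : hasd (fun _ => k) x 0.
Proof.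
move=> e e0; exists 1 => // h _.
by rewrite subrr mulr0 subr0 normr0 mulr_ge0 // ltW.
Qed.

Lemma grad_ineqh (g : R -> R) x y c : convex_fun g -> hasd g x c ->
  g x + c * (y - x) <= g y.
Proof.
move=> cg dg.
have key : forall e : R, 0 < e -> c * (y - x) - g y + g x <= e * `|y - x|.
  move=> e e0; have [d d0 Hd] := dg e e0.
  have yx0 : 0 <= `|y - x| by [].
  set t := d / (d + `|y - x|).
  have t0 : 0 < t by rewrite divr_gt0 // ltr_wpDr.
  have t1 : t <= 1 by rewrite ler_pdivrMr ?mul1r ?lerDl // ltr_wpDr.
  have ht : `|t * (y - x)| < d.
    rewrite normrM (ger0_norm (ltW t0)) /t mulrAC ltr_pdivrMr ?ltr_wpDr //.
    have [->|yxp] := eqVneq `|y - x| 0; first by rewrite !mulr0 addr0 mulr_gt0.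
    rewrite mulrDr ltrDr mulr_gt0 // lt0r yxp //.
  have := Hd _ ht => /ler_normlP [H1 _].
  have := cg y x t; rewrite ltW //= t1 => /(_ isT).
  have -> : t * y + (1 - t) * x = x + t * (y - x) by ring.
  move=> H2.
  have H3 : t * (c * (y - x) - g y + g x) <= t * (e * `|y - x|).
    move: H1; rewrite normrM (ger0_norm (ltW t0)) => H1.
    nra.
  by rewrite ler_pM2l in H3.
have [yx|yx] := eqVneq y x; first by rewrite yx subrr mulr0 addr0.
have nyx : 0 < `|y - x| by rewrite normr_gt0 subr_eq0.
rewrite leNgt; apply/negP => Hlt.
set gap := c * (y - x) - g y + g x.
have gp : 0 < gap by rewrite /gap; lra.
have := key (gap / (2 * `|y - x|)) (divr_gt0 gp (mulr_gt0 (ltr0Sn _ 1) nyx)).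
have -> : gap / (2 * `|y - x|) * `|y - x| = gap / 2.
  by field; rewrite gt_eqF.
rewrite /gap in gp *; lra.
Qed.

Lemma sconv_conv (g : R -> R) : strictly_convex_fun g -> convex_fun g.
Proof.
move=> sg a b t /andP [t0 t1].
have [->|ab] := eqVneq a b.
  have -> : t * b + (1 - t) * b = b by ring.
  have -> : t * g b + (1 - t) * g b = g b by ring.
  by [].
rewrite le_eqVlt in t0; case/orP: t0 => [/eqP <-|t0].
  by rewrite !mul0r !add0r subr0 !mul1r.
rewrite le_eqVlt in t1; case/orP: t1 => [/eqP ->|t1].
  by rewrite subrr !mul0r !addr0 !mul1r.
by apply/ltW/sg => //; rewrite t0 t1.
Qed.

Lemma sconc_conv (g : R -> R) : strictly_concave_fun g ->
  strictly_convex_fun (fun q => -1 * g q).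
Proof.
move=> sg a b t ab tt; have := sg a b t ab tt.
rewrite !mulN1r; lra.
Qed.

Lemma sc_inj (g : R -> R) a b c : strictly_convex_fun g -> hasd g a c -> hasd g b c -> a = b.
Proof.
move=> sg ha hb; apply/eqP; apply/negPn/negP => ab.
have cg := sconv_conv sg.
have G1 := grad_ineqh b cg ha; have G2 := grad_ineqh a cg hb.
have G3 := grad_ineqh ((a + b) / 2) cg ha.
have h12 : 0 < (1 / 2 : R) < 1.
  by rewrite divr_gt0 //= ltr_pdivrMr // mul1r ltr1n.
have := sg a b (1 / 2) ab h12.
have -> : 1 / 2 * a + (1 - 1 / 2) * b = (a + b) / 2 by field.
move: G3; have -> : c * ((a + b) / 2 - a) = c * (b - a) / 2 by field.
move: G1 G2; have -> : c * (a - b) = - (c * (b - a)) by ring.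
lra.
Qed.
End S.

Section Int.
Variable R : realType.
Variables (d : measure_display) (T : measurableType d) (mu : probability T R).
Local Notation int f := (mu.-integrable setT (EFin \o f)).

Lemma Ex_cst (k : R) : Rintegral mu setT (fun _ => k) = k.
Proof.
rewrite Rintegral_cst //; have -> : fine (mu setT) = 1 by rewrite (probability_setT mu).
by rewrite mulr1. Qed.

Lemma int_cst (k : R) : int (fun _ : T => k).
Proof. exact: finite_measure_integrable_cst. Qed.

Lemma int_ext (f g : T -> R) : (forall x, f x = g x) -> int f -> int g.
Proof. by move=> e; have -> : g = f by apply/funext => x; rewrite e. Qed.

Lemma int_add (f g : T -> R) : int f -> int g -> int (fun x => f x + g x).
Proof.
move=> hf hg; have := integrableD measurableT hf hg.
by apply: eq_integrable => // x _ /=; rewrite EFinD.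
Qed.

Lemma int_sc (k : R) (f : T -> R) : int f -> int (fun x => k * f x).
Proof.
move=> hf; have := integrableZl measurableT k hf.
by apply: eq_integrable => // x _ /=; rewrite EFinM.
Qed.

Lemma intE (f : T -> R) : int f ->
  (\int[mu]_(x in setT) (f x)%:E)%E = (Rintegral mu setT f)%:E.
Proof. by move=> hf; rewrite /Rintegral fineK //; exact: integrable_fin_num. Qed.

Lemma Rint_pos (f : T -> R) : int f -> (forall x, 0 < f x) -> 0 < Rintegral mu setT f.
Proof.
move=> hf fp.
have ge0 : 0 <= Rintegral mu setT f by apply: Rintegral_ge0 => x _; exact: ltW.
rewrite lt0r ge0 andbT; apply/negP => /eqP f0.
have mf := measurable_int mu hf.
have : (\int[mu]_(x in setT) `|(EFin \o f) x|)%E = 0%E.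
  rewrite -[RHS]/(0%:E) -f0 -intE //; apply: eq_integral => x _ /=.
  by rewrite gtr0_norm.
move/(ae_eq_integral_abs mu measurableT mf) => [N [mN N0 sN]].
have : mu setT = 0%E.
  apply/eqP; rewrite -measure_le0 -N0; apply: le_measure; rewrite ?inE //.
  move=> x _; apply: sN => /= /(_ I) [].
  by move=> fx0; have := fp x; rewrite fx0 ltxx.
by rewrite (probability_setT mu) => /eqP; rewrite eqe oner_eq0.
Qed.
End Int.

Unset Implicit Arguments.
Theorem theorem1 (R : realType) (mu : probability R R)
  (u : R -> R -> R) (phi : R -> R) (pi0 pi2 p : R)
  (qb : R -> R -> R) (qc : R -> R)
  (Hcont : forall t : R, mu [set t] = 0%E)
  (Hu2 : forall th, twice_diff (fun q => u q th))
  (Hucc : forall th, strictly_concave_fun (fun q => u q th))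
  (Huinc : forall th, {homo (fun q => u q th) : x y / x <= y})
  (Hpi0 : 0 < pi0) (Hpi2 : 0 < pi2) (Hp : 0 < p < 1)
  (Hphicv : convex_fun phi) (Hphi2 : twice_diff phi)
  (Hphi0 : phi 0 = 0) (Hdphi0 : derive1 phi 0 = 0)
  (Hphiev : forall x, phi x = phi (- x))
  (Hqb : forall f th q, Jb pi0 u phi f (qb f th) th <= Jb pi0 u phi f q th)
  (Hqc : forall f th q, Jc pi0 pi2 u f (qc th) th <= Jc pi0 pi2 u f q th)
  (HintJc : forall f, mu.-integrable setT (EFin \o (fun th => Jc pi0 pi2 u f (qc th) th)))
  (HintJb : forall f, mu.-integrable setT (EFin \o (fun th => Jb pi0 u phi f (qb f th) th)))
  (Hintdc : mu.-integrable setT (EFin \o (fun th => du u (qc th) th)))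
  (Hintdb : forall f, mu.-integrable setT (EFin \o (fun th => du u (qb f th) th))) :
  (forall fs, (forall f, Hfun mu p pi0 pi2 u phi qb qc fs <= Hfun mu p pi0 pi2 u phi qb qc f) ->
      pi0 = Mfun mu p u qb qc fs)
  /\ (forall fs, pi0 = Mfun mu p u qb qc fs ->
      forall f, Hfun mu p pi0 pi2 u phi qb qc fs <= Hfun mu p pi0 pi2 u phi qb qc f)
  /\ (strictly_convex_fun phi ->
      forall f1 f2,
        (forall f, Hfun mu p pi0 pi2 u phi qb qc f1 <= Hfun mu p pi0 pi2 u phi qb qc f) ->
        (forall f, Hfun mu p pi0 pi2 u phi qb qc f2 <= Hfun mu p pi0 pi2 u phi qb qc f) ->
        f1 = f2).
Proof.
move: Hp => /andP [p0 p1].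
have dU : forall th q, derivable (fun x => u x th) q 1 := fun th q => (Hu2 th q).1.
have dP : forall x, derivable phi x 1 := fun x => (Hphi2 x).1.
pose Gb f th := Jb pi0 u phi f (qb f th) th.
pose Dd f th := pi0 - du u (qb f th) th.
have hU : forall th q, hasd (fun x => -1 * u x th) q (-1 * du u q th).
  by move=> th q; apply: hasdZ; exact: hasd_der.
have FOCb : forall f th, Dd f th = derive1 phi (f - qb f th).
  move=> f th.
  have H : hasd (fun q => Jb pi0 u phi f q th) (qb f th)
      ((pi0 * 1 + -1 * du u (qb f th) th) + - derive1 phi (f - qb f th)).
    apply: hasd_ext (hasdD (hasdD (hasdZ pi0 (hasd_id _)) (hU th _))
       (@hasd_refl R phi f (qb f th) (dP _))).
    by move=> q; rewrite /Jb mulN1r.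
  have := hasd_min H (Hqb f th); rewrite /Dd; lra.
have FOCc : forall th, du u (qc th) th = pi0 + pi2.
  move=> th.
  have H : hasd (fun q => Jc pi0 pi2 u 0 q th) (qc th)
      ((pi0 * 1 + -1 * du u (qc th) th) + (pi2 * 1 + 0)).
    apply: hasd_ext (hasdD (hasdD (hasdZ pi0 (hasd_id _)) (hU th _))
       (hasdD (hasdZ pi2 (hasd_id _)) (hasd_cst 0 _))).
    by move=> q; rewrite /Jc /=; ring.
  have := hasd_min H (Hqc 0 th); lra.
have SUB : forall th f f', Gb f th + Dd f th * (f' - f) <= Gb f' th.
  move=> th f f'; set q := qb f th; set q' := qb f' th.
  have G1 := grad_ineqh (f' - q') Hphicv (hasd_der (dP (f - q))).
  have G2 := grad_ineqh q' (sconv_conv (sconc_conv (Hucc th))) (hU th q).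
  have hb := FOCb f th; rewrite /Dd -/q in hb.
  move: G1 G2; rewrite /Gb /Dd /Jb -/q -/q' hb.
  set b := derive1 phi (f - q); set a := du u q th.
  have hab : pi0 - a = b := hb.
  have E : b * ((f' - q') - (f - q)) = b * (f' - f) - b * (q' - q) by ring.
  have E2 : b * (q' - q) = pi0 * (q' - q) - a * (q' - q) by rewrite -hab; ring.
  rewrite E E2 /=. lra.
have UP : forall th f e, 0 < e -> exists2 d : R, 0 < d &
    forall h, `|h| < d -> Gb (f + h) th <= Gb f th + Dd f th * h + e * `|h|.
  move=> th f e e0; set q := qb f th.
  have [d d0 Hd] := deriv_eps (dP (f - q)) e0.
  exists d => // h hh; have := Hd h hh => /ler_normlP [_ K].
  have := Hqb (f + h) th q.
  have hb := FOCb f th; rewrite /Dd -/q in hb.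
  rewrite /Gb /Dd /Jb -/q hb.
  have -> : f + h - q = f - q + h by ring.
  move: K; set b := derive1 phi (f - q); lra.
have MONO : forall th a b, a <= b -> Dd a th <= Dd b th.
  by move=> th a b ab; exact: (@D_mono R (Gb^~ th) (Dd^~ th) (SUB th)).
have CONT : forall th x e, 0 < e -> exists2 d : R, 0 < d &
    forall y, `|y - x| < d -> `|Dd y th - Dd x th| <= e.
  by move=> th x e e0; exact: (@D_cont R (Gb^~ th) (Dd^~ th) (SUB th) (UP th)).
have intDd : forall f, mu.-integrable setT (EFin \o Dd f).
  move=> f; apply: int_ext (int_add (int_cst mu pi0) (int_sc (-1) (Hintdb f))).
  by move=> x /=; rewrite /Dd mulN1r.
have EDd : forall f, Ex mu (Dd f) = pi0 - Ex mu (fun th => du u (qb f th) th).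
  move=> f; rewrite /Ex /Dd RintegralB //; try exact: int_cst; try exact: Hintdb.
  by rewrite Ex_cst.
have EJc : forall f f', Ex mu (fun th => Jc pi0 pi2 u f' (qc th) th) =
    Ex mu (fun th => Jc pi0 pi2 u f (qc th) th) - pi2 * (f' - f).
  move=> f f'; rewrite /Ex.
  rewrite (@eq_Rintegral _ _ _ mu _ (fun th => Jc pi0 pi2 u f (qc th) th - pi2 * (f' - f))).
    rewrite RintegralB //; try exact: int_cst; try exact: HintJc.
    by rewrite Ex_cst.
  by move=> th _; rewrite /Jc; ring.
have Edqc : Ex mu (fun th => du u (qc th) th) = pi0 + pi2.
  rewrite /Ex (@eq_Rintegral _ _ _ mu _ (fun _ => pi0 + pi2)) ?Ex_cst //.
have KEY : forall f f', (f' - f) * (pi0 - Mfun mu p u qb qc f) <=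
    Hfun mu p pi0 pi2 u phi qb qc f' - Hfun mu p pi0 pi2 u phi qb qc f.
  move=> f f'.
  have I1 : Ex mu (Gb f) + (f' - f) * Ex mu (Dd f) <= Ex mu (Gb f').
    have -> : Ex mu (Gb f) + (f' - f) * Ex mu (Dd f) =
        Ex mu (fun th => Gb f th + (f' - f) * Dd f th).
      rewrite /Ex (@RintegralD _ _ _ mu setT (Gb f) (fun th => (f' - f) * Dd f th) measurableT (HintJb f) (int_sc _ (intDd f))).
      by rewrite RintegralZl.
    apply: le_Rintegral => //.
      by apply: int_add; [exact: HintJb | exact: int_sc].
    by move=> th _; rewrite mulrC; exact: SUB.
  rewrite /Hfun /Mfun (EJc f f').
  move: I1; rewrite EDd Edqc.
  set A := Ex mu _; set B := Ex mu _; set C := Ex mu _; set D := Ex mu _.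
  move=> I1.
  have q0 : 0 <= 1 - p by rewrite subr_ge0 ltW.
  have I2 := ler_wpM2l q0 I1.
  lra.
have EDdM : forall f, pi0 - Mfun mu p u qb qc f = (1 - p) * Ex mu (Dd f) - p * pi2.
  by move=> f; rewrite /Mfun Edqc EDd; ring.
have P2 : forall fs, pi0 = Mfun mu p u qb qc fs ->
    forall f, Hfun mu p pi0 pi2 u phi qb qc fs <= Hfun mu p pi0 pi2 u phi qb qc f.
  by move=> fs hM f; have := KEY fs f; rewrite -hM subrr mulr0 subr_ge0.
have DCT : forall fs s, -1 <= s <= 1 ->
    (fun n => \int[mu]_(x in setT) (Dd (fs + s / n.+1%:R) x)%:E)%E @ \oo -->
    (\int[mu]_(x in setT) (Dd fs x)%:E)%E.
  move=> fs s /andP [s1 s2].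
  apply: (@dominated_cvg _ _ _ mu setT measurableT
    (fun n x => (Dd (fs + s / n.+1%:R) x)%:E) (fun x => (Dd fs x)%:E)
    (fun x => (`|Dd (fs - 1) x| + `|Dd (fs + 1) x|)%:E)).
  - by move=> n; exact: (measurable_int mu (intDd _)).
  - move=> x _; apply: cvg_EFin; first by apply: nearW.
    apply/cvgrPdist_le => e e0.
    have [dd dd0 Hdd] := CONT x fs e e0.
    near=> n; rewrite /= distrC; apply: Hdd.
    have w0 : 0 < n.+1%:R^-1 :> R by rewrite invr_gt0.
    have : n.+1%:R^-1 < dd by near: n; exact: (near_infty_natSinv_lt (PosNum dd0)).
    rewrite addrC addKr normrM (ger0_norm (ltW w0)).
    move=> wd; apply: le_lt_trans wd.
    have : `|s| <= 1 by rewrite ler_norml s1 s2.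
    move=> hs; rewrite -[X in _ <= X]mul1r; apply: ler_wpM2r => //; exact: ltW.
  - by move=> x _.
  - apply: int_add; exact: integrable_norm (intDd _).
  - move=> n x _ /=; rewrite lee_fin.
    have w0 : 0 < n.+1%:R^-1 :> R by rewrite invr_gt0.
    have w1 : n.+1%:R^-1 <= 1 :> R by rewrite invf_le1 // ler1n.
    have sw : `|s / n.+1%:R| <= 1.
      rewrite normrM (ger0_norm (ltW w0)); apply: le_trans w1.
      rewrite -[X in _ <= X]mul1r; apply: ler_wpM2r; first exact: ltW.
      by rewrite ler_norml s1 s2.
    move: sw; rewrite ler_norml => /andP [sa sb].
    have gen : forall t, -1 <= t -> t <= 1 -> fs - 1 <= fs + t /\ fs + t <= fs + 1.
      by move=> t ta tb; split; lra.
    have [lo hi] := gen _ sa sb.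
    have := MONO x _ _ lo; have := MONO x _ _ hi.
    have := ler_norm (Dd (fs - 1) x); have := ler_norm (- Dd (fs - 1) x).
    have := ler_norm (Dd (fs + 1) x); have := ler_norm (- Dd (fs + 1) x).
    rewrite !normrN ler_norml.
    move=> h1 h2 h3 h4 h5 h6; lra.
have q0 : 0 < 1 - p by rewrite subr_gt0.
have P1 : forall fs, (forall f, Hfun mu p pi0 pi2 u phi qb qc fs <= Hfun mu p pi0 pi2 u phi qb qc f) ->
      pi0 = Mfun mu p u qb qc fs.
  move=> fs Hmin.
  have MIN : forall f, (fs - f) * ((1 - p) * Ex mu (Dd f) - p * pi2) <= 0.
    move=> f; have := KEY f fs; have := Hmin f; rewrite EDdM.
    set X := (fs - f) * _; move=> ha hb; lra.
  set K := p * pi2 / (1 - p).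
  have KE : forall E, ((1 - p) * E - p * pi2 = (1 - p) * (E - K)).
    by move=> E; rewrite /K; field; rewrite gt_eqF.
  have L1 : K <= Ex mu (Dd fs).
    rewrite -lee_fin /Ex -intE //.
    apply: (cvge_ge _ (DCT fs 1 _)); last by rewrite lexx andbT; apply: (le_trans (lerN10 _)).
    apply: nearW => n; rewrite intE // lee_fin.
    have w0 : 0 < n.+1%:R^-1 :> R by rewrite invr_gt0.
    have := MIN (fs + 1 / n.+1%:R).
    rewrite (_ : fs - (fs + 1 / n.+1%:R) = - n.+1%:R^-1); last by rewrite opprD addrA subrr add0r mul1r.
    rewrite KE mulrA !mulNr oppr_le0 pmulr_rge0 ?mulr_gt0 // subr_ge0.
    done.
  have L2 : Ex mu (Dd fs) <= K.
    rewrite -lee_fin /Ex -intE //.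
    apply: (cvge_le _ (DCT fs (-1) _)); last by rewrite lexx; apply: (le_trans (lerN10 _)).
    apply: nearW => n; rewrite intE // lee_fin.
    have w0 : 0 < n.+1%:R^-1 :> R by rewrite invr_gt0.
    have := MIN (fs + -1 / n.+1%:R).
    rewrite (_ : fs - (fs + -1 / n.+1%:R) = n.+1%:R^-1); last by rewrite opprD addrA subrr add0r mulN1r opprK.
    rewrite KE mulrA pmulr_rle0 ?mulr_gt0 // subr_le0.
    done.
  have EK : Ex mu (Dd fs) = K by apply/eqP; rewrite eq_le L1 L2.
  apply/eqP; rewrite -subr_eq0 EDdM KE EK subrr mulr0 //.
split; first exact: P1.
split; first exact: P2.
move=> sphi f1 f2 H1 H2.
have STR : forall a b th, a < b -> Dd a th < Dd b th.
  move=> a b th ab; rewrite lt_neqAle MONO ?ltW // andbT; apply/negP => /eqP E.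
  have Ea := FOCb a th; have Eb := FOCb b th.
  have qE : qb a th = qb b th.
    apply: (sc_inj (sconc_conv (Hucc th)) (hU th (qb a th))).
    have -> : -1 * du u (qb a th) th = -1 * du u (qb b th) th.
      by move: E; rewrite /Dd => /addrI/oppr_inj ->.
    exact: hU.
  have : a - qb a th = b - qb a th.
    apply: (sc_inj sphi (hasd_der (dP (a - qb a th)))).
    rewrite -Ea E Eb qE; exact: hasd_der.
  move/eqP; rewrite (can_eq (addrK _)) => /eqP abe.
  by rewrite abe ltxx in ab.
have E12 : Ex mu (Dd f1) = Ex mu (Dd f2).
  have h1 := EDdM f1; have h2 := EDdM f2.
  rewrite -(P1 f1 H1) subrr in h1; rewrite -(P1 f2 H2) subrr in h2.
  have e1 : (1 - p) * Ex mu (Dd f1) = p * pi2 by apply/eqP; rewrite -subr_eq0 -h1.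
  have e2 : (1 - p) * Ex mu (Dd f2) = p * pi2 by apply/eqP; rewrite -subr_eq0 -h2.
  have nq : 1 - p != 0 := lt0r_neq0 q0.
  by rewrite -(mulKf nq (Ex mu (Dd f1))) e1 -e2 (mulKf nq).
have WL : forall a b, a < b -> Ex mu (Dd a) = Ex mu (Dd b) -> False.
  move=> a b ab Eab.
  have hint : mu.-integrable setT (EFin \o (fun th => Dd b th - Dd a th)).
    apply: int_ext (int_add (intDd b) (int_sc (-1) (intDd a))).
    by move=> th; rewrite mulN1r.
  have pos : forall th, 0 < Dd b th - Dd a th by move=> th; rewrite subr_gt0 STR.
  have := Rint_pos hint pos.
  rewrite (RintegralB measurableT (intDd b) (intDd a)).
  by rewrite /Ex in Eab; rewrite Eab subrr ltxx.
have [lt|gt|//] := ltgtP f1 f2.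
  by exfalso; exact: WL lt E12.
by exfalso; exact: WL gt (esym E12).
Unshelve. all: by end_near.
Qed.
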